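(* If $n\ge 1$, $k\ge 3$ and $t$ is a vertex of the $k$-Pell graph $\Pi_{n,k}$, then $$\deg(t)=|t|_0+2\sum_{i=1}^{k-1}|t|_i+\frac12|t|_k-r,$$ where $r$ is the number of maximal runs of the letter $k-1$ in $t$.
   Context: For an integer $k\ge 2$, a $k$-Pell string is a finite word over the alphabet $\{0,1,\ldots,k-1,kk\}$, i.e. a word over $\{0,1,\ldots,k\}$ in which every maximal run of the letter $k$ has even length. For $n\ge 0$, the $k$-Pell graph $\Pi_{n,k}$ has as vertices all $k$-Pell strings of length $n$, and two vertices are adjacent if one is obtained from the other either by replacing a single letter $i$ by $i+1$ (or vice versa) for some $i\in\{0,1,\ldots,k-2\}$, or by replacing one factor $(k-1)(k-1)$ by $kk$ (or vice versa), in such a way that the resulting string is again a $k$-Pell string. For a word $t$ and a letter $i$, $|t|_i$ denotes the number of occurrences of $i$ in $t$. *)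

(* Defs.v *)
(* Words are sequences of naturals; letters are 0..k. *)
From mathcomp Require Import all_boot all_order all_algebra.
Set Implicit Arguments. Unset Strict Implicit. Unset Printing Implicit Defensive.

(* k-Pell string: a word over the alphabet {0,...,k-1, kk}. *)
Fixpoint pell (k : nat) (t : seq nat) : bool :=
  match t with
  | [::] => true
  | a :: s =>
      if a < k then pell k s
      else if a == k then
        match s with
        | b :: s' => (b == k) && pell k s'
        | [::] => false
        end
      else false
  end.

Fixpoint words (k n : nat) : seq (seq nat) :=
  match n with
  | 0 => [:: [::]]
  | n'.+1 => [seq a :: w | a <- iota 0 k.+1, w <- words k n']
  end.

Definition pell_vertices (n k : nat) : seq (seq nat) :=
  [seq u <- words k n | pell k u].

Definition single_step (k : nat) (t u : seq nat) : bool :=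
  (size t == size u) &&
  has (fun i =>
         [&& all (fun j => (j == i) || (nth 0 t j == nth 0 u j)) (iota 0 (size t)),
             ((nth 0 t i).+1 == nth 0 u i) || ((nth 0 u i).+1 == nth 0 t i),
             nth 0 t i < k & nth 0 u i < k])
      (iota 0 (size t)).

Definition pair_step (k : nat) (t u : seq nat) : bool :=
  (size t == size u) &&
  has (fun i =>
         [&& i.+1 < size t,
             all (fun j => (j == i) || (j == i.+1) || (nth 0 t j == nth 0 u j))
                 (iota 0 (size t)),
             nth 0 t i == k.-1, nth 0 t i.+1 == k.-1,
             nth 0 u i == k & nth 0 u i.+1 == k])
      (iota 0 (size t)).

Definition pell_adj (k : nat) (t u : seq nat) : bool :=
  [|| single_step k t u, pair_step k t u | pair_step k u t].

Definition pell_deg (n k : nat) (t : seq nat) : nat :=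
  count (pell_adj k t) (pell_vertices n k).

Definition runs_of (a : nat) (t : seq nat) : nat :=
  count (fun i => (nth 0 t i == a) && ((i == 0) || (nth 0 t i.-1 != a)))
        (iota 0 (size t)).

(* Main.v *)
Require Import Defs.
From mathcomp Require Import all_boot all_order all_algebra zify.
Import GRing.Theory Num.Theory.

Lemma iota0S n : iota 0 n.+1 = 0 :: map S (iota 0 n).
Proof. by rewrite /= -[1]/(1 + 0) iotaDl; congr (_ :: _); apply: eq_map => j; rewrite add1n. Qed.

Lemma all_nth_eq (s s' : seq nat) : size s = size s' ->
  all (fun j => nth 0 s j == nth 0 s' j) (iota 0 (size s)) = (s == s').
Proof.
move=> Hs; apply/idP/eqP => [/allP H|->]; last by apply/allP.
apply: (eq_from_nth (x0:=0)) => // i Hi; apply/eqP/H; by rewrite mem_iota.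
Qed.

Section K.
Variable k : nat.

Definition stp (a b : nat) := [&& (a.+1 == b) || (b.+1 == a), a < k & b < k].

Fixpoint SS (t u : seq nat) : bool :=
  match t, u with
  | a :: s, b :: s' => ((s == s') && stp a b) || ((a == b) && SS s s')
  | _, _ => false
  end.

Definition pf (a : nat) (s : seq nat) (b : nat) (s' : seq nat) :=
  match s, s' with
  | c :: r, d :: r' => [&& a == k.-1, c == k.-1, b == k, d == k & r == r']
  | _, _ => false
  end.

Fixpoint PS (t u : seq nat) : bool :=
  match t, u with
  | a :: s, b :: s' => pf a s b s' || ((a == b) && PS s s')
  | _, _ => false
  end.

Lemma SS_size t u : SS t u -> size t = size u.
Proof.
elim: t u => [|a s IH] [|b s'] //= /orP [/andP [/eqP -> _]|/andP [_ /IH ->]] //.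
Qed.

Lemma iota1 n : iota 1 n = map S (iota 0 n).
Proof. by rewrite -[1]/(1 + 0) iotaDl; apply: eq_map => j; rewrite add1n. Qed.

Lemma single_stepE t u : single_step k t u = SS t u.
Proof.
elim: t u => [|a s IH] [|b s'] //=.
rewrite /single_step -!/(size (_ :: _)) /= eqSS.
case: (eqVneq (size s) (size s')) => Hs /=; last first.
  apply/esym/negbTE; apply/negP => /orP [/andP [/eqP E _]|/andP [_ /SS_size E]];
  by rewrite E eqxx in Hs.
rewrite iota1 has_map all_map.
rewrite (eq_all (a2 := fun j => nth 0 s j == nth 0 s' j)) // all_nth_eq //.
rewrite -IH /single_step Hs eqxx /=.
congr (_ || _).
case: (a == b) => /=.
  apply: eq_has => i /=; by rewrite all_map.
by apply/negbTE/hasPn => i _ /=.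
Qed.

Lemma PS_size t u : PS t u -> size t = size u.
Proof.
elim: t u => [|a s IH] [|b s'] //= /orP [|/andP [_ /IH ->]] //.
by case: s {IH} => [|c r] //; case: s' => [|d r'] //= /and5P [_ _ _ _ /eqP ->].
Qed.

Lemma pair_stepE t u : pair_step k t u = PS t u.
Proof.
elim: t u => [|a s IH] [|b s'] //=.
rewrite /pair_step -!/(size (_ :: _)) /= eqSS.
case: (eqVneq (size s) (size s')) => Hs /=; last first.
  apply/esym/negbTE; apply/negP => /(@PS_size (a :: s) (b :: s')) [E].
  by rewrite E eqxx in Hs.
rewrite iota1 has_map all_map.
rewrite -IH /pair_step Hs eqxx /=.
congr (_ || _).
  case: s s' Hs {IH} => [|c r] [|d r'] //= [Hs].
  rewrite -Hs iota1 all_map.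
  rewrite (eq_all (a2 := fun j => nth 0 r j == nth 0 r' j)) // all_nth_eq //.
  by case: (r == r'); rewrite /= ?andbT ?andbF.
case: (a == b) => /=.
  apply: eq_has => i /=; by rewrite all_map.
by apply/negbTE/hasPn => i _ /=; rewrite andbF.
Qed.

Lemma mem_words n u : (u \in words k n) = (size u == n) && all (fun x => x <= k) u.
Proof.
elim: n u => [|n IH] u.
  by case: u.
change (words k n.+1) with [seq a :: w | a <- iota 0 k.+1, w <- words k n].
case: u => [|a s].
  by rewrite [RHS]/=; apply/negbTE/allpairsP => [[p [_ _]]].
rewrite [RHS]/= eqSS; apply/allpairsP/andP => [[[x w] /= [Hx Hw [-> ->]]]|[Hs /andP [Ha Hall]]].
  move: Hx Hw; rewrite -[0 :: iota 1 k]/(iota 0 k.+1) mem_iota IH => /andP [_ Hx] /andP [-> ->].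
  by split => //; rewrite andbT -ltnS.
exists (a, s); split => //=; last by rewrite IH Hs.
by rewrite -[0 :: iota 1 k]/(iota 0 k.+1) mem_iota ltnS.
Qed.

Lemma words_uniq n : uniq (words k n).
Proof.
elim: n => // n IH.
change (words k n.+1) with [seq a :: w | a <- iota 0 k.+1, w <- words k n].
apply: allpairs_uniq => //; first exact: iota_uniq.
by move=> [? ?] [? ?] _ _ /= [-> ->].
Qed.

Lemma pell_all u : pell k u -> all (fun x => x <= k) u.
Proof.
elim: (size u).+1 {-2}u (ltnSn (size u)) => // m IH [|a s] //= Hs.
case: ltnP => Ha; first by move/(IH s Hs) => ->; rewrite ltnW.
case: eqP => // ->; case: s Hs => [|b s'] //= Hs /andP [/eqP -> H].
by rewrite leqnn /= (IH s') //; apply: ltnW.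
Qed.

Lemma pell_ind (P : seq nat -> Prop) : P [::] ->
  (forall a s, a < k -> pell k s -> P s -> P (a :: s)) ->
  (forall s, pell k s -> P s -> P [:: k, k & s]) ->
  forall t, pell k t -> P t.
Proof.
move=> H0 H1 H2 t.
elim: (size t).+1 {-2}t (ltnSn (size t)) => // m IH [|a s] //= Hs.
case: ltnP => Ha; first by move=> Hp; apply: H1 => //; apply: IH.
case: eqP => // ->; case: s Hs => [|b s'] //= Hs /andP [/eqP -> H].
by apply: H2 => //; apply: IH => //; apply: ltnW.
Qed.
End K.

Section N.
Variable k : nat.
Hypothesis Hk : 3 <= k.

Definition hl a := if a == 0 then [:: 1] else if a == k.-1 then [:: k.-2] else [:: a.-1; a.+1].
Definition pp a (s : seq nat) : seq (seq nat) :=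
  if a == k.-1 then
    match s with c :: r => if c == k.-1 then [:: [:: k, k & r]] else [::] | [::] => [::] end
  else [::].

Fixpoint N (t : seq nat) : seq (seq nat) :=
  match t with
  | [::] => [::]
  | a :: s =>
      if a < k then [seq b :: s | b <- hl a] ++ pp a s ++ map (cons a) (N s)
      else match s with
           | [::] => [::]
           | b :: s' => [:: k.-1, k.-1 & s'] :: [seq [:: a, b & w] | w <- N s']
           end
  end.

Definition adj t u := [|| SS k t u, PS k t u | PS k u t].

Lemma adj_cons a s b s' : adj (a :: s) (b :: s') =
  [|| (s == s') && stp k a b, (a == b) && SS k s s', pf k a s b s',
      (a == b) && PS k s s', pf k b s' a s | (b == a) && PS k s' s].
Proof. by rewrite /adj /= !orbA. Qed.

Lemma size_cons2 (a b : nat) s s' : (size (b :: s') == size (a :: s)) = (size s' == size s).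
Proof. by []. Qed.

Lemma SS_cons a s b s' : SS k (a :: s) (b :: s') = ((s == s') && stp k a b) || ((a == b) && SS k s s').
Proof. by []. Qed.
Lemma PS_cons a s b s' : PS k (a :: s) (b :: s') = pf k a s b s' || ((a == b) && PS k s s').
Proof. by []. Qed.
Lemma pf_k s b s' : pf k k s b s' = false.
Proof. by case: s s' => [|? ?] [|? ?] //=; have -> : (k == k.-1) = false by lia. Qed.
Lemma N_kk s : N [:: k, k & s] = [:: k.-1, k.-1 & s] :: [seq [:: k, k & w] | w <- N s].
Proof. by rewrite /= ltnn. Qed.
Lemma mem_cm3 (L : seq (seq nat)) a c b d r :
  ([:: b, d & r] \in [seq [:: a, c & w] | w <- L]) = [&& b == a, d == c & r \in L].
Proof.
by apply/mapP/and3P => [[x Hx [-> -> ->]]|[/eqP -> /eqP -> H]]; [rewrite !eqxx|exists r].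
Qed.

Lemma mem_kk0 (L : seq (seq nat)) : ([::] \in [seq [:: k, k & w] | w <- L]) = false.
Proof. by elim: L. Qed.
Lemma mem_kk1 (L : seq (seq nat)) b : ([:: b] \in [seq [:: k, k & w] | w <- L]) = false.
Proof. by elim: L => //= w L IH; rewrite in_cons IH orbF eqseq_cons andbF. Qed.

Lemma stp_k b : stp k k b = false.
Proof. by rewrite /stp ltnn andbF. Qed.

Lemma hl_stp a b : a < k -> (b \in hl a) = stp k a b.
Proof.
move=> Ha; rewrite /hl /stp; case: ifP => [/eqP->|H0]; [|case: ifP => [/eqP->|H1]];
  rewrite !inE; lia.
Qed.

Lemma stp_irr a : stp k a a = false.
Proof. rewrite /stp; lia. Qed.

Lemma mem_cm1 (L : seq nat) s b s' : (b :: s' \in [seq x :: s | x <- L]) = (s' == s) && (b \in L).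
Proof. by apply/mapP/andP => [[x Hx [-> ->]]|[/eqP -> H]]; [rewrite eqxx|exists b]. Qed.

Lemma mem_cm2 (L : seq (seq nat)) a b s' : (b :: s' \in map (cons a) L) = (b == a) && (s' \in L).
Proof. by apply/mapP/andP => [[x Hx [-> ->]]|[/eqP -> H]]; [rewrite eqxx|exists s']. Qed.

Lemma mem_pp a s u : u \in pp a s -> exists r, [/\ a = k.-1, s = k.-1 :: r & u = [:: k, k & r]].
Proof.
rewrite /pp; case: eqP => // ->; case: s => [|c r] //; case: eqP => // -> .
by rewrite inE => /eqP ->; exists r.
Qed.

Lemma pfE a s b s' : pf k a s b s' -> exists r, [/\ a = k.-1, b = k, s = k.-1 :: r & s' = k :: r].
Proof.
case: s s' => [|c r] [|d r'] //= /and5P [/eqP -> /eqP -> /eqP -> /eqP -> /eqP ->].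
by exists r'.
Qed.

Lemma memN t : pell k t -> forall u,
  (pell k u && (size u == size t) && adj t u) = (u \in N t).
Proof.
move: t; apply: (@pell_ind k (fun t => forall u,
  (pell k u && (size u == size t) && adj t u) = (u \in N t))) => [|a s Ha Hs IH|s Hs IH] u.
- by case: u => [|? ?]; rewrite /adj /= ?andbF.
- case: u => [|b s'].
    rewrite [LHS]/= [RHS]/= Ha !mem_cat; apply/esym/negbTE; rewrite !negb_or; apply/and3P; split.
    + by apply/mapP => [[? _]].
    + by apply/negP => /mem_pp [r [_ _ ]].
    + by apply/mapP => [[? _]].
  rewrite [RHS]/= Ha !mem_cat mem_cm1 mem_cm2 -IH hl_stp //.
  rewrite adj_cons size_cons2.
  have pfF : pf k b s' a s = false.
    by apply/negP => /pfE [r [_ E _ _]]; rewrite E ltnn in Ha.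
  rewrite pfF /=.
  case: (eqVneq b a) => [->|nba].
    have pfF2 : pf k a s a s' = false.
      by apply/negP => /pfE [r [E1 E2 _ _]]; move: E1; rewrite E2; lia.
    have ppF : (a :: s' \in pp a s) = false.
      by apply/negP => /mem_pp [r [_ _ [E]]]; rewrite E ltnn in Ha.
    rewrite Ha stp_irr pfF2 ppF ?eqxx /adj /= !andbF /=.
    by case: (pell k s') (size s' == size s) (SS k s s') (PS k s s') (PS k s' s) => [] [] [] [] [].
  have nab : (a == b) = false by rewrite eq_sym; apply/negbTE.
  rewrite ?nab /= ?orbF ?andbF.
  case Hst: (stp k a b).
    have Hb : b < k by move: Hst; rewrite /stp => /and3P [].
    have pfF2 : pf k a s b s' = false.
      by apply/negP => /pfE [r [_ E _ _]]; rewrite E ltnn in Hb.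
    have ppF : (b :: s' \in pp a s) = false.
      by apply/negP => /mem_pp [r [_ _ [E]]]; rewrite E ltnn in Hb.
    rewrite Hb pfF2 ppF /= ?orbF ?andbT.
    case: (eqVneq s' s) => [->|ne]; first by rewrite Hs eqxx.
    by rewrite ?andbF.
  rewrite ?andbF /=.
  apply/idP/idP.
    move=> /andP [_ /pfE [r [-> -> -> ->]]].
    by rewrite /pp !eqxx mem_seq1.
  move=> /mem_pp [r [-> E [-> ->]]]; rewrite E in Hs *.
  have Hk1 : k.-1 < k by lia.
  by move: Hs; rewrite /= Hk1 ltnn !eqxx /= => ->.
- have Hk1 : k.-1 < k by lia.
  case: u => [|b [|d r]]; rewrite N_kk in_cons.
  + rewrite [LHS]/=; apply/esym/negbTE; rewrite negb_or; apply/andP; split => //.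
    by rewrite mem_kk0.
  + rewrite [LHS]/= !andbF; apply/esym/negbTE; rewrite negb_or; apply/andP.
    by split; [rewrite eqseq_cons andbF | rewrite mem_kk1].
  rewrite adj_cons !SS_cons !PS_cons !pf_k /= ?orbF ?andbF ?orbF.
  have kk1 : (k == k.-1) = false by lia.
  rewrite mem_cm3 !eqseq_cons !stp_k ?andbF /= !eqSS.
  case: (eqVneq b k) => [->|nbk].
    rewrite ltnn ?eqxx ?kk1 /=.
    case: (eqVneq d k) => [->|ndk]; last by rewrite /= ?andbF.
    rewrite pf_k -IH /adj ?eqxx /=.
    by case: (pell k r) (size r == size s) (SS k s r) (PS k s r) (PS k r s) => [] [] [] [] [].
  rewrite /= ?andbF ?orbF.
  case: (eqVneq b k.-1) => [->|]; last by rewrite ?andbF.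
  case: (eqVneq d k.-1) => [->|]; last by rewrite ?andbF.
  case: (eqVneq r s) => [->|]; last by rewrite ?andbF.
  by rewrite Hk1 Hs !eqxx.
Qed.
End N.

Lemma runs_cons c a s : runs_of c (a :: s) + [&& a == c, 0 < size s & nth 0 s 0 == c]
  = (a == c) + runs_of c s.
Proof.
rewrite /runs_of -/(size (a :: s)) [size (a :: s)]/= iota0S.
rewrite [count _ (0 :: _)]/= count_map.
case: s => [|d r]; rewrite andbT; first by case: (a == c).
rewrite [size (d :: r)]/= iota0S.
rewrite [count _ (0 :: _)]/= [count _ (0 :: _)]/= !count_map.
set C := count _ (iota 0 (size r)).
by rewrite /= andbT; case: (a == c); case: (d == c); rewrite /= ?addn0 ?add0n ?addnA // addn1 add1n.
Qed.

Lemma sum_ind m n a : \sum_(m <= i < n) (a == i : nat) = (m <= a < n).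
Proof.
elim: n => [|n IH]; first by rewrite big_geq // andbF.
case: (leqP m n) => Hmn.
  rewrite big_nat_recr //= IH; lia.
rewrite big_geq //; lia.
Qed.

Section N2.
Variable k : nat.
Hypothesis Hk : 3 <= k.

Lemma hl_uniq a : uniq (hl k a).
Proof. by rewrite /hl; case: ifP => _ //; case: ifP => _ //=; rewrite inE andbT; lia. Qed.

Lemma N_uniq t : pell k t -> uniq (N k t).
Proof.
move: t; apply: (@pell_ind k) => [|a s Ha Hs IH|s Hs IH] //.
  rewrite /= Ha !cat_uniq; apply/and3P; split.
  - rewrite map_inj_uniq ?hl_uniq //; by move=> x y [].
  - apply/hasPn => u; rewrite mem_cat => /orP [/mem_pp [r [_ _ ->]]|/mapP [w _ ->]].
      by rewrite mem_cm1 hl_stp // /stp ltnn ?andbF.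
    by rewrite mem_cm1 hl_stp // stp_irr ?andbF.
  - apply/and3P; split.
    + by rewrite /pp; case: ifP => _ //; case: s {IH Hs} => [|c r] //; case: ifP.
    + apply/hasPn => u /mapP [w _ ->]; apply/negP => /mem_pp [r [_ _ [E]]].
      by rewrite E ltnn in Ha.
    + by rewrite map_inj_uniq //; move=> x y [].
rewrite N_kk /= mem_cm3.
have -> : (k.-1 == k) = false by lia.
rewrite /= map_inj_uniq //; by move=> x y [].
Qed.

Lemma size_hl a : size (hl k a) = if a == 0 then 1 else if a == k.-1 then 1 else 2.
Proof. by rewrite /hl; case: ifP => _ //; case: ifP. Qed.

Lemma size_pp a s : size (pp k a s) = [&& a == k.-1, 0 < size s & nth 0 s 0 == k.-1].
Proof. by rewrite /pp; case: ifP => _ //; case: s => [|c r] //=; case: ifP. Qed.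

Lemma N_size t : pell k t -> size (N k t) + runs_of k.-1 t =
  count_mem 0 t + 2 * (\sum_(1 <= i < k) count_mem i t) + (count_mem k t)./2.
Proof.
move: t; apply: (@pell_ind k) => [|a s Ha Hs IH|s Hs IH].
- by rewrite /= big1.
- have R := runs_cons k.-1 a s.
  rewrite /= Ha !size_cat !size_map size_hl size_pp big_split /= sum_ind.
  have -> : (a == k) = false by lia.
  rewrite add0n.
  move: IH R; set h := (count_mem k s)./2; set S := \sum_(1 <= i < k) _.
  set x := nth 0 s 0. 
  move=> IH R.
  set r1 := runs_of _ (a :: s) in R *. set r0 := runs_of _ s in R IH *.
  set n0 := size (N k s) in IH *. set c0 := count_mem 0 s in IH *.
  set y := [&& _, _ & _] in R *.
  clearbody h S x r1 r0 n0 c0 y.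
  case: ifP => H0; [|case: ifP => H1]; lia.
- have R1 := runs_cons k.-1 k (k :: s); have R2 := runs_cons k.-1 k s.
  have kk : (k == k.-1) = false by lia.
  rewrite kk /= in R1 R2.
  rewrite N_kk /= size_map !big_split /= !sum_ind eqxx !add1n.
  have -> : (k == 0) = false by lia.
  rewrite ltnn andbF /= !add0n.
  rewrite addn0 add0n in R1; rewrite addn0 add0n in R2.
  by rewrite R1 R2 addSn IH addnS.
Qed.
End N2.

Lemma deg_size n k t : 3 <= k -> pell k t -> size t = n ->
  pell_deg n k t = size (N k t).
Proof.
move=> Hk Ht Hn; rewrite /pell_deg -size_filter; apply: perm_size; apply: uniq_perm.
- by apply: filter_uniq; apply: filter_uniq; apply: words_uniq.
- exact: N_uniq.
move=> u; rewrite mem_filter /pell_vertices mem_filter mem_words -memN // /adj /pell_adj.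
rewrite single_stepE !pair_stepE Hn.
case Pu: (pell k u); last by rewrite !andbF.
rewrite pell_all // andbT /=.
by case: (size u == n); case: [|| _, _ | _]; rewrite ?andbF.
Qed.

Theorem proposition5p4 (n k : nat) (t : seq nat) :
  1 <= n -> 3 <= k -> t \in pell_vertices n k ->
  ((pell_deg n k t)%:Z =
     ((count_mem 0 t + 2 * (\sum_(1 <= i < k) count_mem i t)
        + (count_mem k t)./2)%N)%:Z - (runs_of k.-1 t)%:Z)%R.
Proof.
move=> _ Hk; rewrite /pell_vertices mem_filter mem_words => /andP [Ht /andP [/eqP Hn _]].
by rewrite (deg_size _ _ _ Hk Ht Hn) -(@N_size k Hk t Ht) PoszD addrK.
Qed.
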